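(* Let $u\in[-\infty,\infty)$, $v\in(u,\infty]$, $L,\mathfrak L,d,\mathfrak d\in\mathbb N$, $\theta\in\mathbb R^d$, $l_0,\dots,l_L,\mathfrak l_0,\dots,\mathfrak l_{\mathfrak L}\in\mathbb N$ satisfy $d\ge\sum_{i=1}^Ll_i(l_{i-1}+1)$, $\mathfrak d\ge\sum_{i=1}^{\mathfrak L}\mathfrak l_i(\mathfrak l_{i-1}+1)$, $\mathfrak L\ge L$, $\mathfrak l_0=l_0$, $\mathfrak l_{\mathfrak L}=l_L$, $\mathfrak l_i\ge l_i$ for all $i\in\mathbb N\cap[0,L)$, and $\mathfrak l_i\ge 2l_L$ for all $i\in\mathbb N\cap(L-1,\mathfrak L)$. Then there exists $\vartheta\in\mathbb R^{\mathfrak d}$ such that $\|\vartheta\|_\infty\le\max\{1,\|\theta\|_\infty\}$ and $\mathscr N^{\vartheta,(\mathfrak l_0,\dots,\mathfrak l_{\mathfrak L})}_{u,v}=\mathscr N^{\theta,(l_0,\dots,l_L)}_{u,v}$.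
   Context: $\mathbb N=\{1,2,\dots\}$; $\|\cdot\|_\infty$ is the maximum norm. For $r,s\in\mathbb N$, $k\in\mathbb N_0$, $\theta\in\mathbb R^{n}$ with $n\ge k+rs+r$, $\mathcal A^{\theta,k}_{r,s}\colon\mathbb R^s\to\mathbb R^r$ has $i$-th component $x\mapsto\sum_{j=1}^s\theta_{k+(i-1)s+j}x_j+\theta_{k+rs+i}$. $\mathfrak C_{u,v,n}$ applies $y\mapsto\max\{u,\min\{y,v\}\}$ componentwise on $\mathbb R^n$ and $\mathfrak R_n$ applies $y\mapsto\max\{y,0\}$ componentwise. For $l=(l_0,\dots,l_L)$, $\theta\in\mathbb R^n$ with $n\ge\sum_kl_k(l_{k-1}+1)$ and $s_k=\sum_{j=1}^kl_j(l_{j-1}+1)$, $\mathscr N^{\theta,l}_{u,v}=\mathfrak C_{u,v,l_L}\circ\mathcal A^{\theta,s_{L-1}}_{l_L,l_{L-1}}\circ\mathfrak R_{l_{L-1}}\circ\cdots\circ\mathfrak R_{l_1}\circ\mathcal A^{\theta,0}_{l_1,l_0}\colon\mathbb R^{l_0}\to\mathbb R^{l_L}$ (for $L=1$ just $\mathfrak C_{u,v,l_1}\circ\mathcal A^{\theta,0}_{l_1,l_0}$). *)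

(* Defs.v *)
From HB Require Import structures.
From mathcomp Require Import all_boot all_order all_algebra.
From mathcomp Require Import reals constructive_ereal.
Set Implicit Arguments. Unset Strict Implicit. Unset Printing Implicit Defensive.
Import Order.TTheory GRing.Theory Num.Theory.
Local Open Scope ring_scope.

Section DNN.
Variable R : realType.

(* Vectors in R^n are sequences of length n; indices are 0-based here:
   the paper's theta_m (1-based) is nth 0 theta (m-1). *)

Definition affine (theta : seq R) (k r s : nat) (x : seq R) : seq R :=
  [seq \sum_(j < s) nth 0 theta (k + i * s + j) * nth 0 x j
       + nth 0 theta (k + r * s + i) | i <- iota 0 r].

Definition relu (x : seq R) : seq R := [seq Num.max y 0 | y <- x].

(* componentwise clipping y |-> max{u, min{y, v}}, u v extended reals;
   the result is always finite when u <> +oo and v <> -oo. *)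
Definition clip (u v : \bar R) (x : seq R) : seq R :=
  [seq fine (Order.max u (Order.min (y%:E) v)) | y <- x].

Fixpoint net_aux (theta : seq R) (u v : \bar R) (k prev : nat) (ls : seq nat)
  (x : seq R) : seq R :=
  match ls with
  | [::] => x
  | [:: r] => clip u v (affine theta k r prev x)
  | r :: ls' => net_aux theta u v (k + r * (prev + 1)) r ls'
                        (relu (affine theta k r prev x))
  end.

Definition realization (theta : seq R) (l : seq nat) (u v : \bar R)
  (x : seq R) : seq R :=
  match l with
  | [::] => x
  | l0 :: ls => net_aux theta u v 0 l0 ls x
  end.

Definition maxnorm (theta : seq R) : R :=
  \big[Num.max/0]_(t <- theta) `|t|.

End DNN.

(* Main.v *)
Require Import Defs.
From HB Require Import structures.
From mathcomp Require Import all_boot all_order all_algebra.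
From mathcomp Require Import reals constructive_ereal.
From mathcomp Require Import zify.
Import Order.TTheory GRing.Theory Num.Theory.
Local Open Scope ring_scope.
Set Implicit Arguments. Unset Strict Implicit. Unset Printing Implicit Defensive.

Section Aux.
Variable R : realType.
Implicit Types (theta x : seq R) (w : seq nat).

Definition aff (r s : nat) (W : nat -> nat -> R) (b : nat -> R) (x : seq R) :=
  [seq \sum_(j < s) W i j * nth 0 x j + b i | i <- iota 0 r].

Definition off w k := sumn [seq (nth 0%N w i.+1 * (nth 0%N w i + 1))%N | i <- iota 0 k].

Fixpoint hid w (Wf : nat -> nat -> nat -> R) (bf : nat -> nat -> R) k x :=
  match k with
  | 0 => x
  | k'.+1 => relu (aff (nth 0%N w k) (nth 0%N w k') (Wf k') (bf k') (hid w Wf bf k' x))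
  end.

Definition out (u v : \bar R) w Wf bf K x :=
  clip u v (aff (nth 0%N w K) (nth 0%N w K.-1) (Wf K.-1) (bf K.-1) (hid w Wf bf K.-1 x)).

Lemma affineE theta k r s W b x :
  (forall i j, (i < r)%N -> (j < s)%N -> nth 0 theta (k + i * s + j) = W i j) ->
  (forall i, (i < r)%N -> nth 0 theta (k + r * s + i) = b i) ->
  affine theta k r s x = aff r s W b x.
Proof.
move=> HW Hb; apply/eq_in_map => i; rewrite mem_iota add0n => /andP[_ ir].
rewrite Hb //; congr (_ + _); apply: eq_bigr => j _; rewrite HW //.
Qed.

Lemma offS w m : off w m.+1 = (off w m + nth 0%N w m.+1 * (nth 0%N w m + 1))%N.
Proof.
have E : iota 0 m.+1 = iota 0 m ++ [:: m] by rewrite -addn1 iotaD.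
by rewrite /off E map_cat sumn_cat /= addn0.
Qed.

Lemma net_aux_cons theta (u v : \bar R) k prev r a ls x :
  net_aux theta u v k prev (r :: a :: ls) x =
  net_aux theta u v (k + r * (prev + 1))%N r (a :: ls) (relu (affine theta k r prev x)).
Proof. by []. Qed.

Lemma KL (u v : \bar R) w theta Wf bf x :
  (1 < size w)%N ->
  (forall k i j, (k < (size w).-1)%N -> (i < nth 0%N w k.+1)%N -> (j < nth 0%N w k)%N ->
     nth 0 theta (off w k + i * nth 0%N w k + j) = Wf k i j) ->
  (forall k i, (k < (size w).-1)%N -> (i < nth 0%N w k.+1)%N ->
     nth 0 theta (off w k + nth 0%N w k.+1 * nth 0%N w k + i) = bf k i) ->
  realization theta w u v x = out u v w Wf bf (size w).-1 x.
Proof.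
move=> sw HW Hb.
set K := (size w).-1.
have sK : size w = K.+1 by rewrite /K; case: (size w) sw.
suff H : forall t m, (m + t = K.-1)%N ->
   net_aux theta u v (off w m) (nth 0%N w m) (drop m.+1 w) (hid w Wf bf m x)
   = out u v w Wf bf K x.
  have -> : realization theta w u v x = net_aux theta u v (off w 0) (nth 0%N w 0) (drop 1 w) (hid w Wf bf 0 x).
    by case: (w) sw => //= a w' _; rewrite drop0.
  exact: (H K.-1 0%N (erefl _)).
have HW' := HW; have Hb' := Hb; rewrite -/K in HW' Hb'; clear HW Hb; clearbody K.
elim=> [|t IH] m hm.
- rewrite addn0 in hm.
  have Km : K = m.+1 by subst m; rewrite prednK //; lia.
  rewrite (drop_nth 0); last by rewrite sK Km.
  rewrite drop_oversize; last by rewrite sK Km.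
  rewrite /= /out Km /=; congr clip.
  apply: affineE => [i j ir js|i ir]; [apply: HW' | apply: Hb'] => //; rewrite Km //.
- have mK : (m.+2 < size w)%N by rewrite sK; lia.
  have E2 : drop m.+2 w = nth 0%N w m.+2 :: drop m.+3 w by apply: drop_nth.
  have E : drop m.+1 w = nth 0%N w m.+1 :: drop m.+2 w by apply: drop_nth; lia.
  rewrite -(IH m.+1); last by lia.
  rewrite {1}E E2 net_aux_cons -E2 offS.
  rewrite (@affineE _ _ _ _ (Wf m) (bf m)) // => [i j ir js|i ir]; [apply: HW' | apply: Hb'] => //; lia.
Qed.

Definition enc (r s : nat) (W : nat -> nat -> R) (b : nat -> R) : seq R :=
  mkseq (fun m => if (m < r * s)%N then W (m %/ s)%N (m %% s)%N else b (m - r * s)%N) (r * (s + 1)).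

Lemma enc_W r s W b i j : (i < r)%N -> (j < s)%N -> nth 0 (enc r s W b) (i * s + j) = W i j.
Proof.
move=> ir js; rewrite /enc nth_mkseq; last by nia.
have -> : (i * s + j < r * s)%N by nia.
rewrite divnMDl ?(divn_small js) ?addn0; last by lia.
by rewrite modnMDl modn_small.
Qed.

Lemma enc_b r s W b i : (i < r)%N -> nth 0 (enc r s W b) (r * s + i) = b i.
Proof.
move=> ir; rewrite /enc nth_mkseq; last by nia.
by rewrite ltnNge leq_addr /= addKn.
Qed.

Lemma size_enc r s W b : size (enc r s W b) = (r * (s + 1))%N.
Proof. by rewrite size_mkseq. Qed.

Lemma nth_flatten_gen (ss : seq (seq R)) k p :
  (k < size ss)%N -> (p < size (nth [::] ss k))%N ->
  nth 0 (flatten ss) (sumn (map size (take k ss)) + p) = nth 0 (nth [::] ss k) p.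
Proof.
elim: ss k => [|s ss IH] [|k] //= kl pl.
- by rewrite nth_cat pl.
- by rewrite nth_cat -addnA ltnNge leq_addr /= addKn IH.
Qed.

Lemma maxnorm_cons (a : R) (s : seq R) : maxnorm (a :: s) = Num.max `|a| (maxnorm s).
Proof. by rewrite /maxnorm big_cons. Qed.

Lemma maxnorm_ge0 (s : seq R) : 0 <= maxnorm s.
Proof. elim: s => [|a s IH]; first by rewrite /maxnorm big_nil. by rewrite maxnorm_cons le_max IH orbT. Qed.

Lemma nth_le_maxnorm (s : seq R) n : `|nth 0 s n| <= maxnorm s.
Proof.
elim: s n => [|a s IH] [|n] /=; rewrite ?normr0 ?maxnorm_ge0 // maxnorm_cons le_max ?lexx //.
by rewrite IH orbT.
Qed.

Lemma maxnorm_le (s : seq R) c : 0 <= c -> (forall t, t \in s -> `|t| <= c) -> maxnorm s <= c.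
Proof.
move=> c0; elim: s => [|a s IH] H; first by rewrite /maxnorm big_nil.
rewrite maxnorm_cons ge_max H ?mem_head //=; apply: IH => t ts; apply: H; by rewrite in_cons ts orbT.
Qed.

End Aux.

Section Gen.
Variable R : realType.

Definition S (n i : nat) (f : nat -> R) : R :=
  if (i < n)%N then f i else if (i < 2 * n)%N then - f (i - n)%N else 0.
Definition P (n i j : nat) : R :=
  if (j < n)%N then (i == j)%:R else if (j < 2 * n)%N then - (i == (j - n)%N)%:R else 0.

Lemma nth_relu (s : seq R) i : nth 0 (relu s) i = Num.max (nth 0 s i) 0.
Proof.
rewrite /relu; case: (ltnP i (size s)) => hi; first by rewrite (nth_map 0).
by rewrite !nth_default ?size_map // maxxx.
Qed.

Lemma size_relu (s : seq R) : size (relu s) = size s.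
Proof. by rewrite size_map. Qed.

Lemma size_aff r s W b (x : seq R) : size (aff r s W b x) = r.
Proof. by rewrite size_map size_iota. Qed.

Lemma nth_aff r s W b (x : seq R) i : nth 0 (aff r s W b x) i =
  if (i < r)%N then \sum_(j < s) W i j * nth 0 x j + b i else 0.
Proof.
case: ifP => ir; first by rewrite /aff (nth_map 0%N) ?size_iota // nth_iota.
by rewrite nth_default // size_aff leqNgt ir.
Qed.

Lemma hidS w Wf bf k (x : seq R) : hid w Wf bf k.+1 x =
  relu (aff (nth 0%N w k.+1) (nth 0%N w k) (Wf k) (bf k) (hid w Wf bf k x)).
Proof. by []. Qed.

Lemma sum_pad (l m : nat) (F : nat -> R) : (l <= m)%N -> (forall j, (l <= j)%N -> F j = 0) ->
  \sum_(j < m) F j = \sum_(j < l) F j.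
Proof.
move=> lm HF; rewrite (big_ord_widen _ _ lm) [RHS]big_mkcond /=; apply: eq_bigr => j _.
by case: ifP => // /negbT; rewrite -leqNgt => /HF ->.
Qed.

Lemma sum_delta (m a : nat) (F : nat -> R) : (a < m)%N ->
  \sum_(j < m) (if (j : nat) == a then F j else 0) = F a.
Proof. by move=> am; rewrite -big_mkcond /= big_ord1_eq am. Qed.

Lemma sumP n m i (F : nat -> R) : (i < n)%N -> (2 * n <= m)%N ->
  \sum_(j < m) P n i j * F j = F i - F (i + n)%N.
Proof.
move=> ni nm.
rewrite -(sum_delta F (_ : i < m)%N); last by lia.
rewrite -(sum_delta F (_ : i + n < m)%N); last by lia.
rewrite -sumrB; apply: eq_bigr => j _; rewrite /P.
case: (ltnP j n) => jn.
  have -> : (j == i + n :> nat) = false by apply/negbTE; apply/eqP; lia.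
  case: (eqVneq (j : nat) i) => [->|hji]; first by rewrite ?eqxx /= mulr1n mul1r subr0.
  by rewrite mulr0n mul0r subr0.
case: (ltnP j (2 * n)) => j2.
  have -> : (j == i :> nat) = false by apply/negbTE; apply/eqP; lia.
  case: (eqVneq (j : nat) (i + n)%N) => [->|hj].
    by rewrite addnK eqxx mulr1n mulN1r sub0r.
  have -> : (i == j - n)%N = false by apply/negbTE; apply/eqP; lia.
  by rewrite mulr0n oppr0 mul0r addr0.
have -> : (j == i :> nat) = false by apply/negbTE; apply/eqP; lia.
have -> : (j == i + n :> nat) = false by apply/negbTE; apply/eqP; lia.
by rewrite mul0r subr0.
Qed.

Lemma S_ext n i f g : (forall i', (i' < n)%N -> f i' = g i') -> S n i f = S n i g.
Proof.
move=> H; rewrite /S; case: ifP => [/H //|ni]; case: ifP => // i2.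
by rewrite H //; lia.
Qed.

Lemma S_big n i f : (2 * n <= i)%N -> S n i f = 0.
Proof. by move=> h; rewrite /S ifF ?ifF //; lia. Qed.

Lemma S_add n i f g : S n i f + S n i g = S n i (fun i' => f i' + g i').
Proof. by rewrite /S; case: ifP => //; case: ifP => // _ _; rewrite ?opprD // addr0. Qed.

Lemma S_sum n i s (W : nat -> nat -> R) (h : nat -> R) :
  \sum_(j < s) S n i (fun i' => W i' j) * h j = S n i (fun i' => \sum_(j < s) W i' j * h j).
Proof.
rewrite /S; case: ifP => //; case: ifP => _ _; last by rewrite big1 // => j _; rewrite mul0r.
by rewrite -sumrN; apply: eq_bigr => j _; rewrite mulNr.
Qed.

Lemma relu_id (y : R) : Num.max y 0 - Num.max (- y) 0 = y.
Proof.
have [hy|hy] : (0 <= y) \/ (y < 0) by case: (lerP 0 y); [left|right].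
  have -> : Num.max y 0 = y by apply/max_idPl.
  have -> : Num.max (- y) 0 = 0 by apply/max_idPr; rewrite oppr_le0.
  by rewrite subr0.
have -> : Num.max y 0 = 0 by apply/max_idPr; rewrite ltW.
have -> : Num.max (- y) 0 = - y by apply/max_idPl; rewrite oppr_ge0 ltW.
by rewrite sub0r opprK.
Qed.

End Gen.

Definition WF (R : realType) (l : seq nat) (L' LL : nat) (Wf : nat -> nat -> nat -> R) k i j : R :=
  let n := nth 0%N l L'.+1 in
  if (k < L')%N then (if (i < nth 0%N l k.+1)%N && (j < nth 0%N l k)%N then Wf k i j else 0)
  else if k == L' then (if (j < nth 0%N l k)%N then S n i (fun i' => Wf k i' j) else 0)
  else if (k < LL.-1)%N then S n i (fun i' => P R n i' j)
  else P R n i j.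

Definition BF (R : realType) (l : seq nat) (L' : nat) (bf : nat -> nat -> R) k i : R :=
  let n := nth 0%N l L'.+1 in
  if (k < L')%N then (if (i < nth 0%N l k.+1)%N then bf k i else 0)
  else if k == L' then S n i (bf k) else 0.

Section WFlem.
Variable R : realType.
Variables (L' LL : nat) (l : seq nat) (Wf : nat -> nat -> nat -> R) (bf : nat -> nat -> R).
Lemma WF_lo k i j : (k < L')%N ->
  WF l L' LL Wf k i j = if (i < nth 0%N l k.+1)%N && (j < nth 0%N l k)%N then Wf k i j else 0.
Proof. by move=> h; rewrite /WF h. Qed.
Lemma WF_L i j : WF l L' LL Wf L' i j =
  if (j < nth 0%N l L')%N then S (nth 0%N l L'.+1) i (fun i' => Wf L' i' j) else 0.
Proof. by rewrite /WF ltnn eqxx. Qed.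
Lemma WF_mid k i j : (L' < k)%N -> (k < LL.-1)%N ->
  WF l L' LL Wf k i j = S (nth 0%N l L'.+1) i (fun i' => P R (nth 0%N l L'.+1) i' j).
Proof. by move=> h1 h2; rewrite /WF h2 ifF ?ifF //; lia. Qed.
Lemma WF_last k i j : (L' < k)%N -> (LL.-1 <= k)%N ->
  WF l L' LL Wf k i j = P R (nth 0%N l L'.+1) i j.
Proof. by move=> h1 h2; rewrite /WF ifF ?ifF ?ifF //; lia. Qed.
Lemma BF_lo k i : (k < L')%N -> BF l L' bf k i = if (i < nth 0%N l k.+1)%N then bf k i else 0.
Proof. by move=> h; rewrite /BF h. Qed.
Lemma BF_L i : BF l L' bf L' i = S (nth 0%N l L'.+1) i (bf L').
Proof. by rewrite /BF ltnn eqxx. Qed.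
Lemma BF_hi k i : (L' < k)%N -> BF l L' bf k i = 0.
Proof. by move=> h; rewrite /BF ifF ?ifF //; lia. Qed.
End WFlem.

Section Main.
Variable R : realType.
Variables (L' LL : nat) (l ll : seq nat) (Wf : nat -> nat -> nat -> R) (bf : nat -> nat -> R) (x : seq R).
Hypothesis LLL : (L'.+1 <= LL)%N.
Hypothesis h0 : nth 0%N ll 0 = nth 0%N l 0.
Hypothesis hL : nth 0%N ll LL = nth 0%N l L'.+1.
Hypothesis hmid : forall i, (0 < i < L'.+1)%N -> (nth 0%N l i <= nth 0%N ll i)%N.
Hypothesis hwide : forall i, (L'.+1 <= i < LL)%N -> (2 * nth 0%N l L'.+1 <= nth 0%N ll i)%N.
Hypothesis hx : size x = nth 0%N l 0.

Definition HH k := hid ll (WF l L' LL Wf) (BF l L' bf) k x.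
Definition hh k := hid l Wf bf k x.

Lemma le_ll k : (k <= L')%N -> (nth 0%N l k <= nth 0%N ll k)%N.
Proof. by case: k => [|k] kL; [rewrite h0 | apply: hmid; lia]. Qed.

Lemma pad_inv k : (k <= L')%N -> size (HH k) = nth 0%N ll k /\ size (hh k) = nth 0%N l k /\
  forall i, nth 0 (HH k) i = nth 0 (hh k) i.
Proof.
elim: k => [_|k IH kL]; first by rewrite /HH /hh /= hx h0.
have [sH [sh eH]] := IH (ltnW kL).
rewrite /HH /hh !hidS !size_relu !size_aff; split; [by []|split; [by []|]].
move=> i; rewrite !nth_relu !nth_aff -/(HH k) -/(hh k).
have le1 := le_ll kL.
have le0 := le_ll (ltnW kL).
have kL' : (k < L')%N by lia.
rewrite BF_lo //.
case: (ltnP i (nth 0%N l k.+1)) => il.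
  rewrite (_ : (i < nth 0%N ll k.+1)%N = true); last by lia.
  congr (Num.max (_ + _) 0).
  rewrite (sum_pad (l := nth 0%N l k) (F := fun j => WF l L' LL Wf k i j * nth 0 (HH k) j)) //; last first.
    by move=> j jl; rewrite WF_lo // ifF ?mul0r //; lia.
  by apply: eq_bigr => j _; rewrite WF_lo // il (ltn_ord j) eH.
case: ifP => _ //.
by rewrite big1 ?addr0 ?maxxx // => j _; rewrite WF_lo // ltnNge il /= mul0r.
Qed.

Lemma final_eqL (u v : \bar R) : LL = L'.+1 ->
  out u v ll (WF l L' LL Wf) (BF l L' bf) LL x = out u v l Wf bf L'.+1 x.
Proof.
move=> eLL; rewrite /out (_ : LL.-1 = L'); last by rewrite eLL.
rewrite hL /= -/(HH L') -/(hh L'); congr clip.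
have [sH [sh eH]] := pad_inv (leqnn L').
have le0 := le_ll (leqnn L').
rewrite /aff; apply/eq_in_map => i; rewrite mem_iota add0n => /andP[_ il].
rewrite BF_L /S il; congr (_ + _).
rewrite (sum_pad (l := nth 0%N l L') (F := fun j => WF l L' LL Wf L' i j * nth 0 (HH L') j)) //; last first.
  by move=> j jl; rewrite WF_L ifF ?mul0r //; lia.
by apply: eq_bigr => j _; rewrite WF_L (ltn_ord j) eH /S il.
Qed.

Section Wide.
Hypothesis ltLL : (L'.+1 < LL)%N.
Let n := nth 0%N l L'.+1.
Let y := aff n (nth 0%N l L') (Wf L') (bf L') (hh L').

Definition Rep k := size (HH k) = nth 0%N ll k /\
  forall i, nth 0 (HH k) i = Num.max (S n i (nth 0 y)) 0.

Lemma rep_L : Rep L'.+1.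
Proof.
have [sH [sh eH]] := pad_inv (leqnn L').
have le0 := le_ll (leqnn L').
rewrite /Rep /HH hidS -/(HH L') size_relu size_aff; split => // i.
rewrite nth_relu nth_aff.
case: (ltnP i (nth 0%N ll L'.+1)) => ilL; last first.
  by rewrite S_big //; apply: leq_trans (hwide _) ilL; lia.
congr (Num.max _ 0).
rewrite (sum_pad (l := nth 0%N l L') (F := fun j => WF l L' LL Wf L' i j * nth 0 (HH L') j)) //; last first.
  by move=> j jl; rewrite WF_L ifF ?mul0r //; lia.
under eq_bigr => j _ do rewrite WF_L (ltn_ord j) eH.
rewrite BF_L S_sum S_add; apply: S_ext => i' i'n.
by rewrite /y nth_aff i'n.
Qed.

Lemma rep_step k : (L'.+1 <= k)%N -> (k.+1 < LL)%N -> Rep k -> Rep k.+1.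
Proof.
move=> k1 k2 [sH eH].
rewrite /Rep /HH hidS -/(HH k) size_relu size_aff; split => // i.
rewrite nth_relu nth_aff.
case: (ltnP i (nth 0%N ll k.+1)) => ilL; last first.
  by rewrite S_big //; apply: leq_trans (hwide _) ilL; lia.
congr (Num.max _ 0).
rewrite BF_hi; last by lia.
rewrite addr0.
have EW : forall j, WF l L' LL Wf k i j = S n i (fun i' => P R n i' j) by move=> j; apply: WF_mid; lia.
under eq_bigr => j _ do rewrite EW.
rewrite S_sum; apply: S_ext => i' i'n.
rewrite sumP //; last by apply: hwide; lia.
rewrite !eH /S i'n ifF; last by lia.
by rewrite ifT ?addnK ?relu_id //; lia.
Qed.

Lemma rep_all t : (L'.+1 + t < LL)%N -> Rep (L'.+1 + t).
Proof.
elim: t => [|t IH] h; first by rewrite addn0; exact: rep_L.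
rewrite addnS; apply: rep_step; try lia; apply: IH; lia.
Qed.

Lemma final_eqW (u v : \bar R) :
  out u v ll (WF l L' LL Wf) (BF l L' bf) LL x = out u v l Wf bf L'.+1 x.
Proof.
have [sH eH] := @rep_all (LL.-1 - L'.+1) ltac:(lia).
rewrite (_ : (L'.+1 + (LL.-1 - L'.+1))%N = LL.-1) in sH eH; last by lia.
rewrite /out hL /= -/(HH LL.-1) -/(hh L'); congr clip.
rewrite /aff; apply/eq_in_map => i; rewrite mem_iota add0n => /andP[_ il].
rewrite BF_hi; last by lia.
rewrite addr0.
have EW : forall j, WF l L' LL Wf LL.-1 i j = P R n i j by move=> j; apply: WF_last; lia.
under eq_bigr => j _ do rewrite EW.
rewrite sumP //; last by apply: hwide; lia.
rewrite !eH /S il ifF; last by lia.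
rewrite ifT ?addnK ?relu_id; last by lia.
by rewrite /y nth_aff il.
Qed.

End Wide.

End Main.

Lemma S_bound (R : realType) n i (f : nat -> R) c : (0 <= c) -> (forall i', `|f i'| <= c) -> `|S n i f| <= c.
Proof. by move=> c0 H; rewrite /S; case: ifP => _ //; case: ifP => _; rewrite ?normrN ?normr0. Qed.

Lemma P_bound (R : realType) n i j c : (1 <= c) -> `|P R n i j| <= c.
Proof.
move=> c1; have c0 : (0 <= c) by apply: le_trans c1.
rewrite /P; case: ifP => _; last case: ifP => _; rewrite ?normrN ?normr0 //;
  by case: eqP => _; rewrite ?normr0 ?normr1.
Qed.

Unset Implicit Arguments.

Theorem lemma2p30 (R : realType) (u v : \bar R) (L LL d dd : nat)
  (theta : seq R) (l ll : seq nat) :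
  u != +oo%E -> (u < v)%E ->
  (0 < L)%N -> (0 < LL)%N -> (0 < d)%N -> (0 < dd)%N ->
  size theta = d ->
  size l = L.+1 -> size ll = LL.+1 ->
  all (fun n => 0 < n)%N l -> all (fun n => 0 < n)%N ll ->
  (\sum_(1 <= i < L.+1) nth 0 l i * (nth 0 l i.-1 + 1) <= d)%N ->
  (\sum_(1 <= i < LL.+1) nth 0 ll i * (nth 0 ll i.-1 + 1) <= dd)%N ->
  (L <= LL)%N ->
  nth 0 ll 0 = nth 0 l 0 ->
  nth 0 ll LL = nth 0 l L ->
  (forall i : nat, (0 < i < L)%N -> (nth 0 l i <= nth 0 ll i)%N) ->
  (forall i : nat, (L <= i < LL)%N -> (2 * nth 0 l L <= nth 0 ll i)%N) ->
  exists vartheta : seq R,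
    size vartheta = dd /\
    maxnorm vartheta <= Num.max 1 (maxnorm theta) /\
    (forall x : seq R, size x = nth 0 l 0 ->
       realization vartheta ll u v x = realization theta l u v x).
Proof.
move=> _ _ L0 LL0 _ _ _ sl sll _ _ _ sumdd LLL h0 hL hmid hwide.
case: L L0 sl LLL hL hmid hwide => [//|L'] _ sl LLL hL hmid hwide.
have h0' : nth 0%N ll 0 = nth 0%N l 0 := h0.
have hL' : nth 0%N ll LL = nth 0%N l L'.+1 := hL.
pose Wf k i j := nth 0 theta (off l k + i * nth 0%N l k + j)%N.
pose bf k i := nth 0 theta (off l k + nth 0%N l k.+1 * nth 0%N l k + i)%N.
pose WFb := WF l L' LL Wf.
pose BFb := BF l L' bf.
pose f k := enc (nth 0%N ll k.+1) (nth 0%N ll k) (WFb k) (BFb k).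
pose ss := rcons [seq f k | k <- iota 0 LL] (nseq (dd - off ll LL) 0).
have offLL : (off ll LL <= dd)%N.
  apply: leq_trans sumdd => /=.
  rewrite big_add1 /= /off sumnE big_map /index_iota subn0.
  by [].
have sizef : forall k, size (f k) = (nth 0%N ll k.+1 * (nth 0%N ll k + 1))%N.
  by move=> k; rewrite size_enc.
have takeoff : forall k, (k < LL)%N -> sumn (map size (take k ss)) = off ll k.
  move=> k kL; rewrite /ss -cats1 take_cat size_map size_iota kL -map_take take_iota.
  rewrite /off -map_comp (_ : minn k LL = k); last by lia.
  by apply: congr1; apply: eq_map => i /=; rewrite sizef.
have nthss : forall k, (k < LL)%N -> nth [::] ss k = f k.
  move=> k kL; rewrite /ss nth_rcons size_map size_iota kL (nth_map 0%N) ?size_iota //.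
  by rewrite nth_iota.
exists (flatten ss); split; [|split].
- rewrite /ss -cats1 flatten_cat size_cat /= cats0 size_nseq size_flatten /shape -map_comp.
  rewrite (_ : sumn _ = off ll LL); first by rewrite subnKC.
  by rewrite /off; apply: congr1; apply: eq_map => i /=; rewrite sizef.
- set c := Num.max 1 (maxnorm theta).
  have c1 : 1 <= c by rewrite le_max lexx.
  have c0 : 0 <= c by apply: le_trans c1.
  have cth : forall m, `|nth 0 theta m| <= c.
    by move=> m; apply: le_trans (nth_le_maxnorm theta m) _; rewrite le_max lexx orbT.
  have bW : forall k i j, `|WFb k i j| <= c.
    move=> k i j; rewrite /WFb /WF /=.
    case: ifP => _; first by case: ifP => _; rewrite ?normr0 // cth.
    case: ifP => _; first by case: ifP => _; rewrite ?normr0 //; apply: S_bound => // i'; apply: cth.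
    case: ifP => _; last exact: P_bound.
    by apply: S_bound => // i'; apply: P_bound.
  have bB : forall k i, `|BFb k i| <= c.
    move=> k i; rewrite /BFb /BF /=.
    case: ifP => _; first by case: ifP => _; rewrite ?normr0 // cth.
    by case: ifP => _; rewrite ?normr0 //; apply: S_bound => // i'; apply: cth.
  apply: maxnorm_le => // t /flattenP[s]; rewrite /ss mem_rcons in_cons => /orP[/eqP ->|].
    by rewrite mem_nseq => /andP[_ /eqP ->]; rewrite normr0.
  case/mapP => k _ -> /mapP[m _ ->].
  by case: ifP => _.
- move=> x hx.
  rewrite (KL u v (Wf := WFb) (bf := BFb)); first last.
  + move=> k i kL il; rewrite sll /= in kL.
    rewrite -takeoff // -addnA nth_flatten_gen ?size_rcons ?size_map ?size_iota; try lia.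
      by rewrite nthss // enc_b.
    by rewrite nthss // sizef; nia.
  + move=> k i j kL il jl; rewrite sll /= in kL.
    rewrite -takeoff // -!addnA nth_flatten_gen ?size_rcons ?size_map ?size_iota; try lia.
      by rewrite nthss // enc_W.
    by rewrite nthss // sizef; nia.
  + by rewrite sll.
  rewrite (KL u v (Wf := Wf) (bf := bf)) //; last by rewrite sl.
  rewrite sll sl /=.
  have [eLL|ltLL] : LL = L'.+1 \/ (L'.+1 < LL)%N by lia.
    exact: (final_eqL Wf bf LLL h0' hL' hmid hx u v eLL).
  exact: (final_eqW Wf bf LLL h0' hL' hmid hwide hx ltLL u v).
Qed.
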